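(* Let $\Gamma_1\vdash t:\tau$ and $\Gamma_2\vdash s:\rho$ with $\Gamma_1$ and $\Gamma_2$ disjoint, and let $x$ be a variable. Then $\pi(t[s/x])\preccurlyeq\pi(t)+\pi(s)$.
   Context: Types: $\rho,\tau::=\Diamond\mid\mathbf{B}\mid\tau\multimap\rho\mid\tau\otimes\rho\mid\tau\times\rho\mid\mathbf{L}(\tau)$. Raw terms: $r,s,t::=x^\tau\mid c\mid\lambda x^\tau.\,t\mid\langle t,s\rangle\mid ts\mid\{t\}$, where each variable $x^\tau$ carries a type (infinitely many variables of each type), application associates to the left, terms are identified up to renaming of bound variables ($\lambda$ is the only binder), and the constants $c$ with their types are $\mathsf{tt},\mathsf{ff}:\mathbf{B}$; $\mathsf{nil}_\tau:\mathbf{L}(\tau)$; $\mathsf{cons}_\tau:\Diamond\multimap\tau\multimap\mathbf{L}(\tau)\multimap\mathbf{L}(\tau)$; $\otimes_{\tau,\rho}:\tau\multimap\rho\multimap\tau\otimes\rho$. A context is a finite set of typed variables; $\Gamma_1,\Gamma_2$ denotes $\Gamma_1\cup\Gamma_2$ and presupposes $\Gamma_1\cap\Gamma_2=\emptyset$; $x^\tau$ also denotes $\{x^\tau\}$. The relation $\Gamma\vdash t:\tau$ is inductively defined by: (Var) $\Gamma,x^\tau\vdash x:\tau$; (Const) $\Gamma\vdash c:\tau$ for a constant $c$ of type $\tau$; ($\multimap^+$) from $\Gamma\cup\{x^\tau\}\vdash t:\rho$ infer $\Gamma\vdash\lambda x^\tau.t:\tau\multimap\rho$; ($\multimap^-$)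 from $\Gamma_1\vdash t:\tau\multimap\rho$ and $\Gamma_2\vdash s:\tau$ infer $\Gamma_1,\Gamma_2\vdash ts:\rho$; ($\times^+$) from $\Gamma\vdash t:\tau$ and $\Gamma\vdash s:\rho$ infer $\Gamma\vdash\langle t,s\rangle:\tau\times\rho$; ($\times^-_1$) from $\Gamma\vdash t:\tau\times\rho$ infer $\Gamma\vdash t\,\mathsf{tt}:\tau$; ($\times^-_0$) from $\Gamma\vdash t:\tau\times\rho$ infer $\Gamma\vdash t\,\mathsf{ff}:\rho$; ($\mathbf{B}^-$) from $\Gamma_1\vdash t:\mathbf{B}$, $\Gamma_2\vdash s:\tau$, $\Gamma_2\vdash r:\tau$ infer $\Gamma_1,\Gamma_2\vdash t\langle s,r\rangle:\tau$; ($\otimes^-$) from $\Gamma_1\vdash t:\tau\otimes\rho$ and $\Gamma_2,x^\tau,y^\rho\vdash s:\sigma$ infer $\Gamma_1,\Gamma_2\vdash t(\lambda x^\tau.\lambda y^\rho.s):\sigma$; ($\mathbf{L}^-$) from $\Gamma\vdash t:\mathbf{L}(\tau)$ and $\emptyset\vdash s:\Diamond\multimap\tau\multimap\rho\multimap\rho$ infer $\Gamma\vdash t\{s\}:\rho\multimap\rho$. A list with $n$ entries ($n\ge0$) is a term $\mathsf{cons}_\tau d_1a_1(\cdots(\mathsf{cons}_\tau d_na_n\,\mathsf{nil}_\tau)\cdots)$ with $d_i$ arbitrary terms of type $\Diamond$ and $a_i$ arbitrary terms of type $\tau$. Length: $\mathrm{len}(c)=\mathrm{len}(x)=1$; $\mathrm{len}(ts)=\mathrm{len}(t)+\mathrm{len}(s)$;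 $\mathrm{len}(\lambda x.s)=\mathrm{len}(s)+1$; $\mathrm{len}(\langle t,s\rangle)=\max(\mathrm{len}(t),\mathrm{len}(s))+1$; $\mathrm{len}(\{t\})=0$. $\mathbb{N}^{\mathrm{poly}}$ is the set of functions $\mathbb{N}\to\mathbb{N}$ pointwise bounded by a polynomial; $X$ is the identity, $X_n(m)=\min(n,m)$, natural numbers are identified with constant functions, $+,\cdot,\sup$ are pointwise sum, product and maximum, and $\preccurlyeq$ is the pointwise order. For every raw term $t$ define $\pi(t)\in\mathbb{N}^{\mathrm{poly}}$ by recursion: $\pi(x)=\pi(c)=0$; $\pi(ts)=\pi(t)+X_n\cdot\pi(h)+X_n\cdot\mathrm{len}(h)$ if $t$ is a list with $n$ entries and $s=\{h\}$, and $\pi(ts)=\pi(t)+\pi(s)$ otherwise; $\pi(\lambda x.t)=\pi(t)$; $\pi(\langle t,s\rangle)=\sup(\pi(t),\pi(s))$; $\pi(\{h\})=X\cdot\pi(h)+X\cdot\mathrm{len}(h)$. *)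

(* Defs.v *)
From Stdlib Require Import Arith List.
Import ListNotations.

(* Types: ◇ | B | τ ⊸ ρ | τ ⊗ ρ | τ × ρ | L(τ) *)
Inductive ty : Type :=
| Dia : ty
| Bool : ty
| Lolli : ty -> ty -> ty
| Tens : ty -> ty -> ty
| With : ty -> ty -> ty
| Lst : ty -> ty.

Definition ty_eq_dec (a b : ty) : {a = b} + {a <> b}.
Proof. decide equality. Defined.

Definition var : Type := (nat * ty)%type.

Definition var_eq_dec (a b : var) : {a = b} + {a <> b}.
Proof. decide equality; [apply ty_eq_dec | decide equality]. Defined.

Definition var_ty (v : var) : ty := snd v.

Inductive const : Type :=
| Ctt : const
| Cff : const
| Cnil : ty -> const
| Ccons : ty -> const
| Ctens : ty -> ty -> const.

Definition const_ty (c : const) : ty :=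
  match c with
  | Ctt => Bool
  | Cff => Bool
  | Cnil t => Lst t
  | Ccons t => Lolli Dia (Lolli t (Lolli (Lst t) (Lst t)))
  | Ctens t r => Lolli t (Lolli r (Tens t r))
  end.

(* Raw terms modulo alpha-equivalence, in locally nameless representation:
   bound variables are de Bruijn indices, free variables are typed names.
   [lam τ t] is λx^τ. t ; [pair t s] is ⟨t,s⟩ ; [app t s] is t s ;
   [brace t] is {t}. *)
Inductive term : Type :=
| bvar : nat -> term
| fvar : var -> term
| cst : const -> term
| lam : ty -> term -> term
| pair : term -> term -> term
| app : term -> term -> term
| brace : term -> term.

Fixpoint open_rec (k : nat) (u : term) (t : term) : term :=
  match t with
  | bvar i => if Nat.eqb i k then u else bvar i
  | fvar v => fvar v
  | cst c => cst c
  | lam T b => lam T (open_rec (S k) u b)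
  | pair a b => pair (open_rec k u a) (open_rec k u b)
  | app a b => app (open_rec k u a) (open_rec k u b)
  | brace a => brace (open_rec k u a)
  end.

Definition open1 (t : term) (y : var) : term := open_rec 0 (fvar y) t.
(* body of two nested binders λx.λy.s, instantiated with x (outer) and y (inner) *)
Definition open2 (t : term) (x y : var) : term :=
  open_rec 0 (fvar y) (open_rec 1 (fvar x) t).

Fixpoint fv (t : term) : list var :=
  match t with
  | bvar _ => []
  | fvar v => [v]
  | cst _ => []
  | lam _ b => fv b
  | pair a b => fv a ++ fv b
  | app a b => fv a ++ fv b
  | brace a => fv a
  end.

(* Substitution t[s/x] of the term s for the free variable x
   (capture-avoiding by construction of the locally nameless syntax). *)
Fixpoint subst (x : var) (s : term) (t : term) : term :=
  match t with
  | bvar i => bvar i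
  | fvar v => if var_eq_dec v x then s else fvar v
  | cst c => cst c
  | lam T b => lam T (subst x s b)
  | pair a b => pair (subst x s a) (subst x s b)
  | app a b => app (subst x s a) (subst x s b)
  | brace a => brace (subst x s a)
  end.

(* Contexts: finite sets of typed variables, represented by lists
   (only membership matters; all rules below are extensional). *)
Definition ctx := list var.
Definition disjoint (G1 G2 : ctx) : Prop := forall v, In v G1 -> ~ In v G2.
Definition is_union (G G1 G2 : ctx) : Prop :=
  forall v, In v G <-> In v G1 \/ In v G2.

Inductive typing : ctx -> term -> ty -> Prop :=
| T_Var : forall G v, In v G -> typing G (fvar v) (var_ty v)
| T_Const : forall G c, typing G (cst c) (const_ty c)
| T_Lam : forall G T R t (y : var),
    var_ty y = T -> ~ In y (fv t) ->
    typing (y :: G) (open1 t y) R ->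
    typing G (lam T t) (Lolli T R)
| T_App : forall G G1 G2 t s T R,
    disjoint G1 G2 -> is_union G G1 G2 ->
    typing G1 t (Lolli T R) -> typing G2 s T ->
    typing G (app t s) R
| T_Pair : forall G t s T R,
    typing G t T -> typing G s R -> typing G (pair t s) (With T R)
| T_Proj1 : forall G t T R,
    typing G t (With T R) -> typing G (app t (cst Ctt)) T
| T_Proj0 : forall G t T R,
    typing G t (With T R) -> typing G (app t (cst Cff)) R
| T_If : forall G G1 G2 t s r T,
    disjoint G1 G2 -> is_union G G1 G2 ->
    typing G1 t Bool -> typing G2 s T -> typing G2 r T ->
    typing G (app t (pair s r)) T
| T_TensE : forall G G1 G2 t s T R S (x y : var),
    disjoint G1 G2 -> is_union G G1 G2 ->
    typing G1 t (Tens T R) ->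
    var_ty x = T -> var_ty y = R -> x <> y ->
    ~ In x G2 -> ~ In y G2 -> ~ In x (fv s) -> ~ In y (fv s) ->
    typing (x :: y :: G2) (open2 s x y) S ->
    typing G (app t (lam T (lam R s))) S
| T_ListE : forall G t s T R,
    typing G t (Lst T) ->
    typing [] s (Lolli Dia (Lolli T (Lolli R R))) ->
    typing G (app t (brace s)) (Lolli R R).

Fixpoint list_entries_of (T : ty) (t : term) : option nat :=
  match t with
  | cst (Cnil T') => if ty_eq_dec T T' then Some 0 else None
  | app (app (app (cst (Ccons T')) _) _) r =>
      if ty_eq_dec T T' then
        match list_entries_of T r with Some n => Some (S n) | None => None end
      else None
  | _ => None
  end.

Definition list_entries (t : term) : option nat :=
  match t with
  | cst (Cnil T) => Some 0
  | app (app (app (cst (Ccons T)) _) _) r =>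
      match list_entries_of T r with Some n => Some (S n) | None => None end
  | _ => None
  end.

Fixpoint len (t : term) : nat :=
  match t with
  | bvar _ => 1
  | fvar _ => 1
  | cst _ => 1
  | app a b => len a + len b
  | lam _ b => len b + 1
  | pair a b => Nat.max (len a) (len b) + 1
  | brace _ => 0
  end.

(* Elements of N^poly are represented as functions nat -> nat
   (every π(t) is a polynomial expression in X and the X_n). *)
Definition npoly := nat -> nat.
Definition ple (f g : npoly) : Prop := forall m, f m <= g m.
Definition padd (f g : npoly) : npoly := fun m => f m + g m.

Fixpoint pi (t : term) : npoly :=
  match t with
  | bvar _ => fun _ => 0
  | fvar _ => fun _ => 0
  | cst _ => fun _ => 0
  | app a b =>
      match list_entries a, b with
      | Some n, brace h =>
          fun m => pi a m + Nat.min n m * pi h m + Nat.min n m * len h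
      | _, _ => fun m => pi a m + pi b m
      end
  | lam _ b => pi b
  | pair a b => fun m => Nat.max (pi a m) (pi b m)
  | brace h => fun m => m * pi h m + m * len h
  end.

(* Main.v *)
Require Import Defs.
From Stdlib Require Import Arith List Lia.
Import ListNotations.

Fixpoint lin (x : var) (t : term) : Prop :=
  match t with
  | lam _ b => lin x b
  | pair a b => lin x a /\ lin x b
  | Defs.app a b => lin x a /\ lin x b /\ ~ (In x (fv a) /\ In x (fv b))
  | brace a => ~ In x (fv a)
  | _ => True
  end.

Lemma lin_notin x t : ~ In x (fv t) -> lin x t.
Proof.
  induction t; simpl; intros H; auto;
  repeat rewrite in_app_iff in H; intuition.
Qed.

Lemma fv_open_incl k u t : incl (fv t) (fv (open_rec k u t)).
Proof.
  revert k; induction t; simpl; intros k; try apply incl_refl;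
  try (apply incl_app; [apply incl_appl|apply incl_appr]; auto); auto.
  intros a [].
Qed.

Lemma lin_open x k u t : lin x (open_rec k u t) -> (forall y, u = fvar y -> x <> y) -> lin x t.
Proof.
  revert k; induction t; simpl; intros k H Hu; auto.
  - eauto.
  - destruct H; split; eauto.
  - destruct H as [H1 [H2 H3]]; split; [eauto|split; [eauto|]].
    intros [A B]; apply H3; split; eapply fv_open_incl; eauto.
  - intros A; apply H; eapply fv_open_incl; eauto.
Qed.

Lemma typing_fv G t T : typing G t T -> incl (fv t) G.
Proof.
  induction 1; simpl; intros a Ha; repeat rewrite in_app_iff in *.
  - destruct Ha as [<-|[]]; auto.
  - destruct Ha.
  - assert (In a (fv (open1 t y))) by (eapply fv_open_incl; eauto).
    destruct (IHtyping a H2) as [<-|]; [contradiction|auto].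
  - apply H0; destruct Ha; auto.
  - destruct Ha; auto.
  - destruct Ha as [|[]]; auto.
  - destruct Ha as [|[]]; auto.
  - apply H0; repeat rewrite in_app_iff in *; intuition.
  - apply H0; destruct Ha; [left; auto|right].
    assert (In a (fv (open2 s x y))).
    { unfold open2; eapply fv_open_incl; eapply fv_open_incl; eauto. }
    destruct (IHtyping2 a H11) as [<-|[<-|]]; try contradiction; auto.
  - destruct Ha as [|]; auto. destruct (IHtyping2 a H1).
Qed.

Lemma typing_lin G t T x : typing G t T -> lin x t.
Proof.
  induction 1; simpl; auto.
  - destruct (var_eq_dec x y) as [<-|Hxy]; [apply lin_notin; auto|].
    apply (lin_open x 0 (fvar y)); auto.
    intros y' [= <-]; auto.
  - repeat split; auto. intros [A B].
    apply (H x); [apply (typing_fv _ _ _ H1)|apply (typing_fv _ _ _ H2)]; auto.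
  - repeat split; auto. intros [_ []].
  - repeat split; auto. intros [_ []].
  - repeat split; auto. rewrite in_app_iff. intros [A B].
    apply (H x); [apply (typing_fv _ _ _ H1); auto|].
    destruct B; [apply (typing_fv _ _ _ H2)|apply (typing_fv _ _ _ H3)]; auto.
  - assert (HG: forall z, In z (fv s) -> In z G2).
    { intros z Hz. assert (In z (fv (open2 s x0 y))).
      { unfold open2; eapply fv_open_incl; eapply fv_open_incl; eauto. }
      destruct (typing_fv _ _ _ H9 z H10) as [<-|[<-|]]; try contradiction; auto. }
    split; auto. split.
    + destruct (var_eq_dec x x0) as [<-|Hx0].
      * apply lin_notin; auto.
      * destruct (var_eq_dec x y) as [<-|Hy].
        -- apply lin_notin; auto.
        -- apply (lin_open x 1 (fvar x0)); [|intros ? [= <-]; auto].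
           apply (lin_open x 0 (fvar y)); [|intros ? [= <-]; auto]. exact IHtyping2.
    + intros [A B]. apply (H x); [apply (typing_fv _ _ _ H1); auto|auto].
  - repeat split; auto.
    + intros A; apply (typing_fv _ _ _ H0) in A; destruct A.
    + intros [_ A]. apply (typing_fv _ _ _ H0) in A; destruct A.
Qed.

Lemma subst_notin x s t : ~ In x (fv t) -> subst x s t = t.
Proof.
  induction t; simpl; intros H; repeat rewrite in_app_iff in H; f_equal; auto.
  destruct (var_eq_dec v x); subst; auto. exfalso; auto.
Qed.

Lemma leo_subst x s T t n : list_entries_of T t = Some n ->
  list_entries_of T (subst x s t) = Some n.
Proof.
  revert n; induction t as [k| | | | |t1 IHt1 t2 IHt2|]; intros n H; simpl in H; try discriminate.
  - destruct c; try discriminate. simpl. exact H.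
  - destruct t1; try discriminate. destruct t1_1; try discriminate.
    destruct t1_1_1; try discriminate. destruct c as [| | |T0|]; try discriminate.
    destruct (ty_eq_dec T T0); try discriminate.
    destruct (list_entries_of T t2) eqn:E; try discriminate.
    simpl. destruct (ty_eq_dec T T0); [|contradiction].
    rewrite (IHt2 n0 eq_refl). exact H.
Qed.

Lemma le_subst x s t n : list_entries t = Some n ->
  list_entries (subst x s t) = Some n.
Proof.
  intros H; destruct t; simpl in H; try discriminate.
  - destruct c; try discriminate. simpl. exact H.
  - destruct t1; try discriminate. destruct t1_1; try discriminate.
    destruct t1_1_1; try discriminate. destruct c; try discriminate.
    destruct (list_entries_of t t2) eqn:E; try discriminate.
    simpl. rewrite (leo_subst x s t t2 n0 E). exact H.
Qed.

Lemma min_mul n m a : Nat.min n m * a <= m * a.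
Proof. apply Nat.mul_le_mono_r, Nat.le_min_r. Qed.

Lemma main x s t : lin x t -> forall m, pi (subst x s t) m <= pi t m + pi s m.
Proof.
  induction t; simpl; intros Hl m; try lia.
  - destruct (var_eq_dec v x); simpl; lia.
  - auto.
  - destruct Hl as [A B]. specialize (IHt1 A m); specialize (IHt2 B m); lia.
  - destruct Hl as [A [B C]].
    specialize (IHt1 A m); specialize (IHt2 B m).
    destruct (in_dec var_eq_dec x (fv t1)) as [Hx|Hx].
    + assert (Hb : ~ In x (fv t2)) by tauto.
      rewrite (subst_notin x s t2 Hb).
      destruct (list_entries t1) as [n|] eqn:E.
      * rewrite (le_subst x s t1 n E). destruct t2; lia.
      * destruct (list_entries (subst x s t1)) as [n'|]; destruct t2; try lia.
        all: simpl; try (pose proof (min_mul n' m (pi t2 m)); pose proof (min_mul n' m (len t2)); lia).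
    + rewrite (subst_notin x s t1 Hx).
      destruct (list_entries t1) as [n|] eqn:E.
      * destruct t2; simpl in *; try lia.
        -- destruct (var_eq_dec v x); try lia.
           destruct s; try lia.
           simpl; pose proof (min_mul n m (pi s m)); pose proof (min_mul n m (len s)); lia.
        -- rewrite (subst_notin x s t2 B). lia.
      * lia.
  - rewrite (subst_notin x s t Hl). lia.
Qed.

Theorem lemma4p7 (G1 G2 : ctx) (t s : term) (T R : ty) (x : var) :
  typing G1 t T -> typing G2 s R -> disjoint G1 G2 ->
  ple (pi (subst x s t)) (padd (pi t) (pi s)).
Proof.
  intros H _ _ m. unfold padd. apply main. eapply typing_lin; eauto.
Qed.
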